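(* Let $a=\sum_{t=0}^7a_te_t$ and $b=\sum_{t=0}^7b_te_t$ be nonzero elements of $C\ell_{1,2}$ with $P(a)=P(b)=0$, and let $d\in C\ell_{1,2}$. Then the equation $axb=d$ (in the unknown $x\in C\ell_{1,2}$) is solvable if and only if $$\frac{aa'db'b}{16(a_0^2+a_2^2+a_4^2+a_6^2)(b_0^2+b_2^2+b_4^2+b_6^2)}=d,$$ in which case all the solutions are given by $$x=\frac{a'db'}{16(a_0^2+a_2^2+a_4^2+a_6^2)(b_0^2+b_2^2+b_4^2+b_6^2)}+y-\frac{a'aybb'}{16(a_0^2+a_2^2+a_4^2+a_6^2)(b_0^2+b_2^2+b_4^2+b_6^2)},\qquad y\in C\ell_{1,2}\text{ arbitrary}.$$
   Context: $C\ell_{1,2}$ is the real Clifford algebra generated by $i_1,i_2,i_3$ with $i_1^2=1$, $i_2^2=i_3^2=-1$ and $i_ti_m=-i_mi_t$ for $t\neq m$, with real basis $e_0=1$, $e_1=i_1$, $e_2=i_2$, $e_3=i_1i_2$, $e_4=i_3$, $e_5=i_1i_3$, $e_6=i_2i_3$, $e_7=i_1i_2i_3$. For $a=\sum_{t=0}^7 a_te_t$ ($a_t\in\mathbb{R}$) define: the prime $a'=a_0+a_1e_1-a_2e_2+a_3e_3-a_4e_4+a_5e_5-a_6e_6-a_7e_7$; $N(a)=a_0^2-a_1^2+a_2^2-a_3^2+a_4^2-a_5^2+a_6^2-a_7^2$; $T(a)=a_0a_7+a_2a_5-a_1a_6-a_3a_4$; $P(a)=N(a)^2+4T(a)^2$.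 *)

(* Defs.v *)
From HB Require Import structures.
From mathcomp Require Import all_boot all_order all_algebra.
From mathcomp Require Import ring.
Set Implicit Arguments. Unset Strict Implicit. Unset Printing Implicit Defensive.
Import Order.TTheory GRing.Theory Num.Theory.
Local Open Scope ring_scope.

(* An element a = sum_(t=0..7) a_t e_t with real basis
   e0=1, e1=i1, e2=i2, e3=i1 i2, e4=i3, e5=i1 i3, e6=i2 i3, e7=i1 i2 i3,
   i.e. e_t is the product (in increasing order) of the generators i_(j+1)
   for the bits j set in t. *)
Record cl12 (R : realFieldType) := Cl12 {
  c0 : R; c1 : R; c2 : R; c3 : R; c4 : R; c5 : R; c6 : R; c7 : R }.

Section Cl12.
Variable R : realFieldType.
Implicit Types a b : cl12 R.

Definition cl_zero : cl12 R := Cl12 0 0 0 0 0 0 0 0.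
Definition cl_one : cl12 R := Cl12 1 0 0 0 0 0 0 0.
Definition cl_add a b : cl12 R :=
  Cl12 (c0 a + c0 b) (c1 a + c1 b) (c2 a + c2 b) (c3 a + c3 b)
       (c4 a + c4 b) (c5 a + c5 b) (c6 a + c6 b) (c7 a + c7 b).
Definition cl_opp a : cl12 R :=
  Cl12 (- c0 a) (- c1 a) (- c2 a) (- c3 a) (- c4 a) (- c5 a) (- c6 a) (- c7 a).
Definition cl_sub a b : cl12 R := cl_add a (cl_opp b).
Definition cl_scale (r : R) a : cl12 R :=
  Cl12 (r * c0 a) (r * c1 a) (r * c2 a) (r * c3 a)
       (r * c4 a) (r * c5 a) (r * c6 a) (r * c7 a).

(* Clifford product, obtained by bilinear extension of the products of basis
   blades under i1^2 = 1, i2^2 = i3^2 = -1, i_t i_m = - i_m i_t (t <> m). *)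
Definition cl_mul a b : cl12 R :=
  Cl12
    (c0 a * c0 b + c1 a * c1 b - c2 a * c2 b + c3 a * c3 b - c4 a * c4 b + c5 a * c5 b - c6 a * c6 b - c7 a * c7 b)
    (c0 a * c1 b + c1 a * c0 b + c2 a * c3 b - c3 a * c2 b + c4 a * c5 b - c5 a * c4 b - c6 a * c7 b - c7 a * c6 b)
    (c0 a * c2 b + c1 a * c3 b + c2 a * c0 b - c3 a * c1 b + c4 a * c6 b - c5 a * c7 b - c6 a * c4 b - c7 a * c5 b)
    (c0 a * c3 b + c1 a * c2 b - c2 a * c1 b + c3 a * c0 b - c4 a * c7 b + c5 a * c6 b - c6 a * c5 b - c7 a * c4 b)
    (c0 a * c4 b + c1 a * c5 b - c2 a * c6 b + c3 a * c7 b + c4 a * c0 b - c5 a * c1 b + c6 a * c2 b + c7 a * c3 b)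
    (c0 a * c5 b + c1 a * c4 b + c2 a * c7 b - c3 a * c6 b - c4 a * c1 b + c5 a * c0 b + c6 a * c3 b + c7 a * c2 b)
    (c0 a * c6 b + c1 a * c7 b + c2 a * c4 b - c3 a * c5 b - c4 a * c2 b + c5 a * c3 b + c6 a * c0 b + c7 a * c1 b)
    (c0 a * c7 b + c1 a * c6 b - c2 a * c5 b + c3 a * c4 b + c4 a * c3 b - c5 a * c2 b + c6 a * c1 b + c7 a * c0 b).

Definition cl_prime a : cl12 R :=
  Cl12 (c0 a) (c1 a) (- c2 a) (c3 a) (- c4 a) (c5 a) (- c6 a) (- c7 a).

Definition clN a : R :=
  c0 a ^+ 2 - c1 a ^+ 2 + c2 a ^+ 2 - c3 a ^+ 2 + c4 a ^+ 2 - c5 a ^+ 2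
  + c6 a ^+ 2 - c7 a ^+ 2.
Definition clT a : R :=
  c0 a * c7 a + c2 a * c5 a - c1 a * c6 a - c3 a * c4 a.
Definition clP a : R := clN a ^+ 2 + 4 * clT a ^+ 2.

Definition clE a : R := c0 a ^+ 2 + c2 a ^+ 2 + c4 a ^+ 2 + c6 a ^+ 2.

End Cl12.

Section Sanity.
Variable R : realFieldType.
Let i1 : cl12 R := Cl12 0 1 0 0 0 0 0 0.
Let i2 : cl12 R := Cl12 0 0 1 0 0 0 0 0.
Let i3 : cl12 R := Cl12 0 0 0 0 1 0 0 0.
Let e (k : nat) : cl12 R :=
  Cl12 (k == 0)%:R (k == 1)%:R (k == 2)%:R (k == 3)%:R
       (k == 4)%:R (k == 5)%:R (k == 6)%:R (k == 7)%:R.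
Lemma sanity_i1sq : cl_mul i1 i1 = cl_one R.
Proof. by rewrite /cl_mul /= /cl_one; congr Cl12; ring. Qed.
Lemma sanity_i2sq : cl_mul i2 i2 = cl_opp (cl_one R).
Proof. by rewrite /cl_mul /= /cl_one /cl_opp /=; congr Cl12; ring. Qed.
Lemma sanity_i3sq : cl_mul i3 i3 = cl_opp (cl_one R).
Proof. by rewrite /cl_mul /= /cl_one /cl_opp /=; congr Cl12; ring. Qed.
Lemma sanity_anti12 : cl_mul i1 i2 = cl_opp (cl_mul i2 i1).
Proof. by rewrite /cl_mul /= /cl_opp /=; congr Cl12; ring. Qed.
Lemma sanity_anti13 : cl_mul i1 i3 = cl_opp (cl_mul i3 i1).
Proof. by rewrite /cl_mul /= /cl_opp /=; congr Cl12; ring. Qed.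
Lemma sanity_anti23 : cl_mul i2 i3 = cl_opp (cl_mul i3 i2).
Proof. by rewrite /cl_mul /= /cl_opp /=; congr Cl12; ring. Qed.
Lemma sanity_e3 : cl_mul i1 i2 = e 3.
Proof. by rewrite /cl_mul /= /e /=; congr Cl12; ring. Qed.
Lemma sanity_e5 : cl_mul i1 i3 = e 5.
Proof. by rewrite /cl_mul /= /e /=; congr Cl12; ring. Qed.
Lemma sanity_e6 : cl_mul i2 i3 = e 6.
Proof. by rewrite /cl_mul /= /e /=; congr Cl12; ring. Qed.
Lemma sanity_e7 : cl_mul (cl_mul i1 i2) i3 = e 7.
Proof. by rewrite /cl_mul /= /e /=; congr Cl12; ring. Qed.
Lemma sanity_assoc (a b c : cl12 R) :
  cl_mul (cl_mul a b) c = cl_mul a (cl_mul b c).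
Proof. by case: a b c => ? ? ? ? ? ? ? ? [? ? ? ? ? ? ? ?] [? ? ? ? ? ? ? ?];
  rewrite /cl_mul /=; congr Cl12; ring. Qed.
End Sanity.

(* Main.v *)
Require Import Defs.
From HB Require Import structures.
From mathcomp Require Import all_boot all_order all_algebra.
From mathcomp Require Import ring lra.
Import GRing.Theory Num.Theory.
Local Open Scope ring_scope.

Section Aux.
Variable R : realFieldType.
Implicit Types u v w a b : cl12 R.

Lemma assoc u v w : cl_mul (cl_mul u v) w = cl_mul u (cl_mul v w).
Proof. exact: sanity_assoc. Qed.

Lemma scale_mulL r u v : cl_mul (cl_scale r u) v = cl_scale r (cl_mul u v).
Proof. by case: u v => ? ? ? ? ? ? ? ? [? ? ? ? ? ? ? ?]; rewrite /cl_mul /cl_scale /=; congr Cl12; ring. Qed.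

Lemma scale_mulR r u v : cl_mul u (cl_scale r v) = cl_scale r (cl_mul u v).
Proof. by case: u v => ? ? ? ? ? ? ? ? [? ? ? ? ? ? ? ?]; rewrite /cl_mul /cl_scale /=; congr Cl12; ring. Qed.

Lemma scale_scale r s u : cl_scale r (cl_scale s u) = cl_scale (r * s) u.
Proof. by case: u => ? ? ? ? ? ? ? ?; rewrite /cl_scale /=; congr Cl12; ring. Qed.

Lemma scale1 u : cl_scale 1 u = u.
Proof. by case: u => ? ? ? ? ? ? ? ?; rewrite /cl_scale /=; congr Cl12; ring. Qed.

Lemma subaddK u x : cl_sub (cl_add u x) u = x.
Proof. by case: u x => ? ? ? ? ? ? ? ? [? ? ? ? ? ? ? ?]; rewrite /cl_sub /cl_add /cl_opp /=; congr Cl12; ring. Qed.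

Lemma addsubK u x : cl_sub (cl_add x u) u = x.
Proof. by case: u x => ? ? ? ? ? ? ? ? [? ? ? ? ? ? ? ?]; rewrite /cl_sub /cl_add /cl_opp /=; congr Cl12; ring. Qed.

Lemma dist_sub a u v w :
  cl_mul (cl_mul a (cl_sub u v)) w = cl_sub (cl_mul (cl_mul a u) w) (cl_mul (cl_mul a v) w).
Proof. by case: a u v w => ? ? ? ? ? ? ? ? [? ? ? ? ? ? ? ?] [? ? ? ? ? ? ? ?] [? ? ? ? ? ? ? ?];
  rewrite /cl_sub /cl_add /cl_opp /cl_mul /=; congr Cl12; ring. Qed.

Lemma dist_add a u v w :
  cl_mul (cl_mul a (cl_add u v)) w = cl_add (cl_mul (cl_mul a u) w) (cl_mul (cl_mul a v) w).
Proof. by case: a u v w => ? ? ? ? ? ? ? ? [? ? ? ? ? ? ? ?] [? ? ? ? ? ? ? ?] [? ? ? ? ? ? ? ?];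
  rewrite /cl_add /cl_mul /=; congr Cl12; ring. Qed.

Lemma key_gen a : cl_mul (cl_mul a (cl_prime a)) a =
  cl_add (cl_scale (4 * clE a) a)
   (Cl12 (-3 * clN a * c0 a - 2 * clT a * c7 a)
         (- clN a * c1 a + 2 * clT a * c6 a)
         (-3 * clN a * c2 a - 2 * clT a * c5 a)
         (- clN a * c3 a + 2 * clT a * c4 a)
         (-3 * clN a * c4 a + 2 * clT a * c3 a)
         (- clN a * c5 a - 2 * clT a * c2 a)
         (-3 * clN a * c6 a + 2 * clT a * c1 a)
         (- clN a * c7 a - 2 * clT a * c0 a)).
Proof. by case: a => ? ? ? ? ? ? ? ?; rewrite /cl_mul /cl_add /cl_scale /clE /clN /clT /cl_prime /=;
  congr Cl12; ring. Qed.

Lemma NT0 a : clP a = 0 -> clN a = 0 /\ clT a = 0.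
Proof.
rewrite /clP => H.
have h1 : 0 <= clN a ^+ 2 by exact: sqr_ge0.
have h2 : 0 <= clT a ^+ 2 by exact: sqr_ge0.
have e1 : clN a ^+ 2 = 0 by lra.
have e2 : clT a ^+ 2 = 0 by lra.
by split; apply/eqP; rewrite -sqrf_eq0 ?e1 ?e2.
Qed.

Lemma key a : clP a = 0 -> cl_mul (cl_mul a (cl_prime a)) a = cl_scale (4 * clE a) a.
Proof.
move=> /NT0 [hN hT]; rewrite key_gen hN hT.
case: a {hN hT} => ? ? ? ? ? ? ? ?; rewrite /cl_add /cl_scale /=; congr Cl12; ring.
Qed.

Lemma keyR a z : clP a = 0 ->
  cl_mul a (cl_mul (cl_prime a) (cl_mul a z)) = cl_scale (4 * clE a) (cl_mul a z).
Proof. by move=> H; rewrite -!assoc key // scale_mulL. Qed.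

Lemma keyR1 a : clP a = 0 ->
  cl_mul a (cl_mul (cl_prime a) a) = cl_scale (4 * clE a) a.
Proof. by move=> H; rewrite -assoc key. Qed.

Lemma E_neq0 a : a <> cl_zero R -> clP a = 0 -> clE a != 0.
Proof.
move=> Ha /NT0 [hN _]; apply/eqP => hE; apply: Ha.
move: hN hE; rewrite /clN /clE.
case: a => x0 x1 x2 x3 x4 x5 x6 x7 /= hN hE.
have s0 := sqr_ge0 x0; have s1 := sqr_ge0 x1; have s2 := sqr_ge0 x2;
have s3 := sqr_ge0 x3; have s4 := sqr_ge0 x4; have s5 := sqr_ge0 x5;
have s6 := sqr_ge0 x6; have s7 := sqr_ge0 x7.
have z : forall y : R, 0 <= y ^+ 2 -> y ^+ 2 = 0 -> y = 0.
  by move=> y _ /eqP; rewrite sqrf_eq0 => /eqP.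
rewrite /cl_zero; congr Cl12; apply: z => //; lra.
Qed.

End Aux.

Theorem theorem4p1 (R : realFieldType) (a b d : cl12 R) :
  a <> cl_zero R -> b <> cl_zero R -> clP a = 0 -> clP b = 0 ->
  let D := 16 * clE a * clE b in
  ((exists x : cl12 R, cl_mul (cl_mul a x) b = d) <->
     cl_scale D^-1
       (cl_mul (cl_mul (cl_mul (cl_mul a (cl_prime a)) d) (cl_prime b)) b) = d)
  /\
  ((exists x : cl12 R, cl_mul (cl_mul a x) b = d) ->
     forall x : cl12 R,
       cl_mul (cl_mul a x) b = d <->
       exists y : cl12 R,
         x = cl_sub
               (cl_add (cl_scale D^-1 (cl_mul (cl_mul (cl_prime a) d) (cl_prime b))) y)
               (cl_scale D^-1
                  (cl_mul (cl_mul (cl_mul (cl_mul (cl_prime a) a) y) b) (cl_prime b)))).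
Proof.
move=> Ha Hb Pa Pb D.
have Ea := @E_neq0 R a Ha Pa; have Eb := @E_neq0 R b Hb Pb.
have coef : D^-1 * (4 * clE a * (4 * clE b)) = 1.
  by rewrite /D; field; rewrite Ea Eb.
have L1 : forall y, cl_mul (cl_mul a (cl_scale D^-1
     (cl_mul (cl_mul (cl_mul (cl_mul (cl_prime a) a) y) b) (cl_prime b)))) b
     = cl_mul (cl_mul a y) b.
  move=> y; rewrite scale_mulR scale_mulL !assoc keyR // keyR1 //.
  by rewrite !scale_mulR scale_scale scale_scale -mulrA coef scale1.
have P1 : (exists x : cl12 R, cl_mul (cl_mul a x) b = d) <->
     cl_scale D^-1
       (cl_mul (cl_mul (cl_mul (cl_mul a (cl_prime a)) d) (cl_prime b)) b) = d.
  split.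
  - move=> [x <-]; rewrite !assoc keyR // keyR1 //.
    by rewrite !scale_mulR scale_scale scale_scale -mulrA coef scale1.
  - move=> H; exists (cl_scale D^-1 (cl_mul (cl_mul (cl_prime a) d) (cl_prime b))).
    by rewrite -[in RHS]H scale_mulR scale_mulL !assoc.
split => // Hex x; have H := (proj1 P1) Hex.
have L0 : cl_mul (cl_mul a (cl_scale D^-1 (cl_mul (cl_mul (cl_prime a) d) (cl_prime b)))) b = d.
  by rewrite -[in RHS]H scale_mulR scale_mulL !assoc.
split.
- move=> Hx; exists x.
  have -> : cl_scale D^-1 (cl_mul (cl_mul (cl_prime a) d) (cl_prime b)) =
            cl_scale D^-1 (cl_mul (cl_mul (cl_mul (cl_mul (cl_prime a) a) x) b) (cl_prime b)).
    by rewrite -Hx !assoc.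
  by rewrite subaddK.
- move=> [y ->]; rewrite dist_sub dist_add L0 L1.
  by rewrite addsubK.
Qed.
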